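(* Let $n$ be a power of $2$, let $w\ge1$, and let $\mathbf{M}_1,\dots,\mathbf{M}_n$ be $w\times w$ real matrices. For every $(\ell,r)\in\mathsf{BS}_n$ with $r-\ell\ge2$ let $\mathbf{M}^{(0)}_{\ell..r}$ be a given $w\times w$ real matrix, and set $\mathbf{M}^{(0)}_{r-1..r}=\mathbf{M}_r$. Define $\mathbf{M}^{(k)}_{\ell..r}$ for all integers $k\ge0$ and $(\ell,r)\in\mathsf{BS}_n$ by the recursion in the context. Then for every integer $k\ge0$ and every $(\ell,r)\in\mathsf{BS}_n$ there is a multiset $S\subseteq\mathsf{IS}_{\ell..r}\times\{-1,+1\}$ such that (i) $\mathbf{M}^{(k)}_{\ell..r}=\sum_{(\mathsf{sq},\sigma)\in S}\sigma\,\mathbf{M}^{(0)}_{\mathsf{sq}}$; (ii) $|S|\le(r-\ell)^{2k}$; (iii) for every $(\mathsf{sq},\sigma)\in S$, the length of $\mathsf{sq}$ is at most $k\log(r-\ell)+1$.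
   Context: Logarithms are base $2$. $\mathsf{BS}_n=\{(\ell,r):\exists i,k\ge 0,\ \ell=i2^k,\ r=\ell+2^k,\ 0\le\ell<r\le n\}$. Recursion: for $(\ell,r)\in\mathsf{BS}_n$ with $r-\ell=1$, $\mathbf{M}^{(k)}_{\ell..r}=\mathbf{M}_r$ for all $k\ge0$; for $r-\ell\ge2$ and $k\ge1$, with $m=(\ell+r)/2$, $$\mathbf{M}^{(k)}_{\ell..r}=\sum_{i+j=k}\mathbf{M}^{(i)}_{\ell..m}\mathbf{M}^{(j)}_{m..r}-\sum_{i+j=k-1}\mathbf{M}^{(i)}_{\ell..m}\mathbf{M}^{(j)}_{m..r}$$ (sums over integers $i,j\ge0$). For $0\le\ell<r\le n$, $\mathsf{IS}_{\ell..r}$ is the set of increasing sequences $\mathsf{sq}=(i_0,i_1,\dots,i_h)$ with $\ell=i_0<i_1<\dots<i_h=r$; $h$ is the length of $\mathsf{sq}$. In the sequences appearing here each consecutive pair $(i_{j-1},i_j)$ lies in $\mathsf{BS}_n$, and $\mathbf{M}^{(0)}_{\mathsf{sq}}=\prod_{j=1}^h\mathbf{M}^{(0)}_{i_{j-1}..i_j}$. *)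

(* Defs.v *)
From mathcomp Require Import all_boot all_order all_algebra.
From mathcomp Require Import reals.
Set Implicit Arguments. Unset Strict Implicit. Unset Printing Implicit Defensive.
Import Order.TTheory GRing.Theory Num.Theory.
Local Open Scope ring_scope.

Definition isBS (n l r : nat) : Prop :=
  exists i k : nat, l = (i * 2 ^ k)%N /\ r = (l + 2 ^ k)%N /\ (r <= n)%N.

Section Rec.
Variables (R : realType) (w : nat).
Variable M : nat -> 'M[R]_w.          (* M r = M_r, 1 <= r <= n *)
Variable M0 : nat -> nat -> 'M[R]_w.  (* M0 l r = given M^(0)_{l..r} for r - l >= 2 *)

(* segM e l k = M^{(k)}_{l..l+2^e} *)
Fixpoint segM (e l k : nat) {struct e} : 'M[R]_w :=
  match e with
  | 0 => M l.+1
  | e'.+1 =>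
      match k with
      | 0 => M0 l (l + 2 ^ e'.+1)%N
      | k'.+1 =>
          \sum_(i < k.+1) (segM e' l i *m segM e' (l + 2 ^ e')%N (k - i)%N)
          - \sum_(i < k) (segM e' l i *m segM e' (l + 2 ^ e')%N (k' - i)%N)
      end
  end.

(* M^{(k)}_{l..r} for (l, r) in BS_n (so r - l is a power of 2) *)
Definition Mseg (l r k : nat) : 'M[R]_w := segM (trunc_log 2 (r - l)) l k.

Definition M0seq (sq : seq nat) : 'M[R]_w :=
  foldr (fun p A => Mseg p.1 p.2 0 *m A) 1%:M (zip sq (behead sq)).
End Rec.

Definition inIS (n l r : nat) (sq : seq nat) : Prop :=
  [/\ (0 < size sq)%N, sorted ltn sq, head 0%N sq = l, last 0%N sq = r &
      forall j : nat, (j.+1 < size sq)%N -> isBS n (nth 0%N sq j) (nth 0%N sq j.+1)].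

Definition sgn (R : realType) (b : bool) : R := if b then 1 else -1.

(* Main.v *)
Require Import Defs.
From mathcomp Require Import all_boot all_order all_algebra.
From mathcomp Require Import reals.
From mathcomp Require Import zify.
Import Order.TTheory GRing.Theory Num.Theory.
Local Open Scope ring_scope.

Section H.
Variables (R : realType) (n w : nat) (M : nat -> 'M[R]_w) (M0 : nat -> nat -> 'M[R]_w).

Lemma M0seq_cat x t y u : last x t = y ->
  M0seq M M0 (x :: t ++ u) = M0seq M M0 (x :: t) *m M0seq M M0 (y :: u).
Proof.
elim: t x => [|z t IH] x /= Hl.
  by rewrite /M0seq /= mul1mx Hl.
rewrite /M0seq /= -mulmxA. congr (_ *m _). exact: IH.
Qed.

Lemma nth_cat_tail x t y u j : last x t = y -> (size t <= j)%N ->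
  nth 0%N (x :: t ++ u) j = nth 0%N (y :: u) (j - size t).
Proof.
move=> Hl Hj. rewrite -cat_cons nth_cat /=.
case: ltnP => Hj2.
  have -> : j = size t by clear -Hj Hj2; lia.
  by rewrite subnn /= -Hl [in LHS](_ : size t = (size (x::t)).-1) // nth_last.
have -> : (j - size t = (j - (size t).+1).+1)%N by lia.
by [].
Qed.

Lemma inIS_cat l m r x t y u :
  inIS n l m (x :: t) -> inIS n m r (y :: u) ->
  inIS n l r (x :: t ++ u) /\ last x t = y.
Proof.
case=> _ s1 h1 l1 b1 [_ s2 h2 l2 b2] /=.
simpl in h1, h2, l1, l2.
have Hl : last x t = y by rewrite l1 h2.
rewrite -h1 -l2.
split=> //; split => //=.
- rewrite cat_path; apply/andP; split; [exact: s1 | rewrite Hl; exact: s2].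
- by rewrite last_cat Hl.
move=> j Hj. rewrite size_cat /= in Hj.
case: (ltnP j (size t)) => Hjt.
  rewrite -cat_cons !nth_cat /= ltnS (ltnW Hjt) Hjt.
  by apply: b1 => /=; rewrite ltnS.
change (nth 0%N (t ++ u) j) with (nth 0%N (x :: t ++ u) j.+1).
rewrite (@nth_cat_tail x t y u) // (@nth_cat_tail x t y u) //; last by apply: leqW.
have -> : (j.+1 - size t = (j - size t).+1)%N by lia.
apply: b2 => /=. lia.
Qed.


Definition cmb (a b : seq nat * bool) := (a.1 ++ behead b.1, a.2 == b.2).
Definition ngt (a : seq nat * bool) := (a.1, ~~ a.2).
Definition fS (s : seq nat * bool) : 'M[R]_w := sgn R s.2 *: M0seq M M0 s.1.

Lemma sgn_eq (a b : bool) : sgn R (a == b) = sgn R a * sgn R b.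
Proof. by case: a; case: b; rewrite /sgn /= ?mulr1 ?mul1r ?mulrN1 ?opprK. Qed.

Lemma fS_ngt s : fS (ngt s) = - fS s.
Proof. by case: s => a [] /=; rewrite /fS /sgn /= scaleNr ?opprK. Qed.

Lemma prod_sum (SA SB : seq (seq nat * bool)) :
 (forall a b, a \in SA -> b \in SB ->
    M0seq M M0 (a.1 ++ behead b.1) = M0seq M M0 a.1 *m M0seq M M0 b.1) ->
 (\sum_(a <- SA) fS a) *m (\sum_(b <- SB) fS b) =
   \sum_(s <- [seq cmb a b | a <- SA, b <- SB]) fS s.
Proof.
move=> H; rewrite big_allpairs_dep mulmx_suml; apply: eq_big_seq => a Ha.
rewrite mulmx_sumr; apply: eq_big_seq => b Hb.
rewrite /fS /cmb /= H // -scalemxAl -scalemxAr scalerA sgn_eq.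
by [].
Qed.

Lemma size_flat_le (U : Type) (f : nat -> seq U) s B :
  (forall i, i \in s -> (size (f i) <= B)%N) ->
  (size (flatten (map f s)) <= size s * B)%N.
Proof.
elim: s => [|x s IH] //= H.
rewrite size_cat mulSn leq_add //.
  by apply: H; rewrite inE eqxx.
by apply: IH => i Hi; apply: H; rewrite inE Hi orbT.
Qed.

Lemma mem_flat_pairs z (SAf SBf : nat -> seq (seq nat * bool)) s :
  z \in flatten [seq [seq cmb a b | a <- SAf i, b <- SBf i] | i <- s] ->
  exists i a b, [/\ i \in s, a \in SAf i, b \in SBf i & z = cmb a b].
Proof.
case/flattenP => L /mapP [i Hi ->] /allpairsP [[a b] /= [Ha Hb ->]].
by exists i, a, b.
Qed.

Definition Rep e l k (S : seq (seq nat * bool)) :=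
  [/\ segM M M0 e l k = \sum_(s <- S) fS s,
      (size S <= (2 ^ e) ^ (2 * k))%N &
      forall s, s \in S -> inIS n l (l + 2 ^ e) s.1 /\ ((size s.1).-1 <= k * e + 1)%N].

Lemma seg0 e l : M0seq M M0 [:: l; (l + 2 ^ e)%N] = segM M M0 e l 0.
Proof. by rewrite /M0seq /= mulmx1 /Mseg addKn trunc_expnK. Qed.

Lemma rep_single e l k : isBS n l (l + 2 ^ e) -> (k = 0%N \/ e = 0%N) ->
  Rep e l k [:: ([:: l; (l + 2 ^ e)%N], true)].
Proof.
move=> hB hk; split.
- rewrite big_seq1 /fS /= scale1r seg0.
  by case: hk => ->; [|case: k].
- by rewrite /= expn_gt0 expn_gt0.
move=> s; rewrite inE => /eqP -> /=; split; last by lia.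
split => //=.
- by rewrite andbT -addn1 leq_add2l expn_gt0.
- by case=> [|j] //=.
Qed.


Lemma bs_split e l : isBS n l (l + 2 ^ e.+1) ->
  isBS n l (l + 2 ^ e) /\ isBS n (l + 2 ^ e) (l + 2 ^ e + 2 ^ e).
Proof.
case=> i [k0 [hl [hr hn]]].
have E : (2 ^ k0 = 2 ^ e.+1)%N by move/eqP: hr; rewrite eqn_add2l => /eqP.
rewrite E expnS in hl hr; rewrite expnS in hn.
split.
  exists (i * 2)%N, e; split => //; first by rewrite hl; lia.
  split => //; lia.
exists (i * 2).+1, e; split => //; first by rewrite hl; lia.
split => //; lia.
Qed.

Lemma rep e : forall l k, isBS n l (l + 2 ^ e) -> {S | Rep e l k S}.
Proof.
elim: e => [|e IH] l k hB.
  by exists [:: ([:: l; (l + 2 ^ 0)%N], true)]; apply: rep_single => //; right.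
case: k => [|k'].
  by exists [:: ([:: l; (l + 2 ^ e.+1)%N], true)]; apply: rep_single => //; left.
have [hA hB'] := bs_split _ _ hB.
set m := (l + 2 ^ e)%N in hA hB'.
pose SA i := sval (IH l i hA).
pose SB j := sval (IH m j hB').
have RA i : Rep e l i (SA i) := svalP (IH l i hA).
have RB j : Rep e m j (SB j) := svalP (IH m j hB').
have Hr : (l + 2 ^ e.+1 = m + 2 ^ e)%N by rewrite /m expnS; lia.
have Hcmb : forall i j a b, a \in SA i -> b \in SB j ->
    inIS n l (l + 2 ^ e.+1) (cmb a b).1 /\
    M0seq M M0 (a.1 ++ behead b.1) = M0seq M M0 a.1 *m M0seq M M0 b.1 /\
    (size (cmb a b).1).-1 = ((size a.1).-1 + (size b.1).-1)%N.
  move=> i j a b Ha Hb.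
  have [_ _ /(_ a Ha) [Ia _]] := RA i.
  have [_ _ /(_ b Hb) [Ib _]] := RB j.
  rewrite /cmb /=.
  move: Ia Ib; case: a.1 => [|x t]; first by case.
  case: b.1 => [|y u]; first by move=> _; case.
  move=> Ia Ib.
  have [I1 Hl] := inIS_cat _ _ _ _ _ _ _ Ia Ib.
  rewrite Hr; split => //; split; first exact: M0seq_cat.
  by rewrite /= size_cat.
pose F1 := flatten [seq [seq cmb a b | a <- SA i, b <- SB (k'.+1 - i)%N] | i <- iota 0 k'.+2].
pose F2 := flatten [seq [seq cmb a b | a <- SA i, b <- SB (k' - i)%N] | i <- iota 0 k'.+1].
exists (F1 ++ map ngt F2); split.
- rewrite big_cat big_map.
  under [X in _ = _ + X]eq_bigr do rewrite fS_ngt.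
  rewrite sumrN /F1 /F2 !big_flatten !big_map.
  have E1 : forall (F : nat -> 'M[R]_w) N, \sum_(i < N) F i = \sum_(i <- iota 0 N) F i.
    by move=> F N; rewrite -(big_mkord xpredT F) /index_iota subn0.
  rewrite [LHS]/= (E1 (fun i => segM M M0 e l i *m segM M M0 e (l + 2 ^ e) (k'.+1 - i)%N))
     (E1 (fun i => segM M M0 e l i *m segM M M0 e (l + 2 ^ e) (k' - i)%N)).
  congr (_ - _); apply: eq_big_seq => i _.
    have [-> _ _] := RA i; have [-> _ _] := RB (k'.+1 - i)%N.
    by rewrite prod_sum // => a b Ha Hb; have [_ [-> _]] := Hcmb _ _ _ _ Ha Hb.
  have [-> _ _] := RA i; have [-> _ _] := RB (k' - i)%N.
  by rewrite prod_sum // => a b Ha Hb; have [_ [-> _]] := Hcmb _ _ _ _ Ha Hb.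
- set Y := ((2 ^ e) ^ (2 * k'.+1))%N.
  have Hpair : forall i j, (i + j <= k'.+1)%N ->
      (size [seq cmb a b | a <- SA i, b <- SB j] <= Y)%N.
    move=> i j hij; rewrite size_allpairs.
    have [_ h1 _] := RA i; have [_ h2 _] := RB j.
    apply: leq_trans (leq_mul h1 h2) _.
    rewrite -expnD; apply: leq_pexp2l; first by rewrite expn_gt0.
    lia.
  have s1 : (size F1 <= k'.+2 * Y)%N.
    rewrite /F1; have := @size_flat_le _
      (fun i => [seq cmb a b | a <- SA i, b <- SB (k'.+1 - i)%N]) (iota 0 k'.+2) Y.
    rewrite size_iota; apply => i; rewrite mem_iota => /andP [_ hi].
    apply: Hpair; lia.
  have s2 : (size F2 <= k'.+1 * Y)%N.
    rewrite /F2; have := @size_flat_le _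
      (fun i => [seq cmb a b | a <- SA i, b <- SB (k' - i)%N]) (iota 0 k'.+1) Y.
    rewrite size_iota; apply => i; rewrite mem_iota => /andP [_ hi].
    apply: Hpair; lia.
  have EY : ((2 ^ e.+1) ^ (2 * k'.+1) = 2 ^ (2 * k'.+1) * Y)%N.
    by rewrite /Y expnS expnMn.
  have HZ : (2 * k'.+1 < 2 ^ (2 * k'.+1))%N by apply: ltn_expl.
  rewrite size_cat size_map EY.
  have : ((2 * k'.+1).+1 * Y <= 2 ^ (2 * k'.+1) * Y)%N by apply: leq_mul.
  lia.
- have Hel : forall i j a b, (i + j <= k'.+1)%N -> a \in SA i -> b \in SB j ->
      inIS n l (l + 2 ^ e.+1) (cmb a b).1 /\
      ((size (cmb a b).1).-1 <= k'.+1 * e.+1 + 1)%N.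
    move=> i j a b hij Ha Hb.
    have [I1 [_ ->]] := Hcmb _ _ _ _ Ha Hb.
    split => //.
    have [_ _ /(_ a Ha) [_ la]] := RA i.
    have [_ _ /(_ b Hb) [_ lb]] := RB j.
    have : ((i + j) * e <= k'.+1 * e)%N by apply: leq_mul.
    rewrite mulnDl; lia.
  move=> s; rewrite mem_cat => /orP [].
    case/mem_flat_pairs => i [a [b [hi Ha Hb ->]]].
    apply: Hel Ha Hb; move: hi; rewrite mem_iota; lia.
  case/mapP => s' /mem_flat_pairs [i [a [b [hi Ha Hb ->]]]] -> /=.
  apply: Hel Ha Hb; move: hi; rewrite mem_iota; lia.
Qed.

End H.


Theorem lemma3p10 (R : realType) (n w : nat)
    (M : nat -> 'M[R]_w) (M0 : nat -> nat -> 'M[R]_w) :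
  (exists p : nat, n = (2 ^ p)%N) -> (0 < w)%N ->
  forall (k l r : nat), isBS n l r ->
  exists S : seq (seq nat * bool),
    [/\ Mseg M M0 l r k = \sum_(s <- S) sgn R s.2 *: M0seq M M0 s.1,
        (size S <= (r - l) ^ (2 * k))%N &
        forall s, s \in S ->
          inIS n l r s.1 /\ ((size s.1).-1 <= k * trunc_log 2 (r - l) + 1)%N].
Proof.
move=> _ _ k l r hB.
have hB0 := hB.
case: hB0 => i [e [_ [hr _]]].
subst r.
case: (@rep R n w M M0 e l k hB) => S [h1 h2 h3].
exists S; rewrite addKn trunc_expnK //; split => //.
by rewrite /Mseg addKn trunc_expnK // h1.
Qed.
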